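(* Let $(A,\mathcal H)$ be a left bialgebroid. The assignments $I\mapsto[\pi:\mathcal H\to\mathcal H/I]$ and $[\pi:\mathcal H\to\overline{\mathcal H}]\mapsto\ker(\pi)$ are well-defined, mutually inverse bijections between the set of left ideal two-sided coideals of $\mathcal H$ and the set of quotient left $\mathcal H$-module corings of $\mathcal H$.
   Context: $\Bbbk$ is a field. A left bialgebroid $(A,\mathcal H)$: $\Bbbk$-algebras $A,\mathcal H$, algebra maps $s:A\to\mathcal H$, $t:A^o\to\mathcal H$ with commuting images, $A$-bilinear $\Delta:\mathcal H\to\mathcal H\otimes_A\mathcal H$, $\varepsilon:\mathcal H\to A$ (bimodule structure $a\cdot h\cdot b=s(a)t(b)h$; $\mathcal H\otimes_A\mathcal H$ = quotient of $\mathcal H\otimes\mathcal H$ by span of $t(a)x\otimes y-x\otimes s(a)y$), with $(\mathcal H,\Delta,\varepsilon)$ a coassociative counital $A$-coring, $\Delta$ an algebra map into the Takeuchi product $\{\sum x_i\otimes_Ay_i:\sum x_it(a)\otimes_Ay_i=\sum x_i\otimes_Ay_is(a)\ \forall a\}$, $\varepsilon(xs(\varepsilon(y)))=\varepsilon(xy)=\varepsilon(xt(\varepsilon(y)))$, $\varepsilon(1)=1$; $\Delta(x)=\sum x_1\otimes_Ax_2$. Left $\mathcal H$-modules form a monoidal category: each is an $A$-bimodule via $a\cdot m\cdot b=s(a)t(b)m$, the tensor product $M\otimes_AN$ (quotient of $M\otimes N$ by $t(a)m\otimes n-m\otimes s(a)n$) has action $h(m\otimes n)=\sum h_1m\otimes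 h_2n$, and the unit is $A$ with $h\cdot a=\varepsilon(hs(a))$. A left $\mathcal H$-module coring is a comonoid in this monoidal category; $\mathcal H$ itself is one (regular left action, $\Delta$, $\varepsilon$). A quotient left $\mathcal H$-module coring of $\mathcal H$ is a surjective morphism of left $\mathcal H$-module corings $\pi:\mathcal H\to\overline{\mathcal H}$ (considered up to isomorphism under $\mathcal H$). A left ideal two-sided coideal is a left ideal $I$ with $\varepsilon(I)=0$ and $\Delta(I)\subseteq$ image of $I\otimes_A\mathcal H+\mathcal H\otimes_AI$. *)

(* Defs.v *)
(* Left bialgebroids, tensor products over A encoded by
   representatives (finite lists of simple tensors) together with the
   equality of M (x)_A N, defined through its universal property. *)
From HB Require Import structures.
From mathcomp Require Import all_boot all_order all_algebra.
Set Implicit Arguments. Unset Strict Implicit. Unset Printing Implicit Defensive.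
Import GRing.Theory.
Local Open Scope ring_scope.

Section Defs.
Variable k : fieldType.

Definition klinear (U V : lmodType k) (f : U -> V) : Prop :=
  forall (c : k) (x y : U), f (c *: x + y) = c *: f x + f y.

Definition kbilinear (M N W : lmodType k) (b : M -> N -> W) : Prop :=
  (forall n, klinear (fun m => b m n)) /\ (forall m, klinear (b m)).

Definition ktrilinear (M N P W : lmodType k) (g : M -> N -> P -> W) : Prop :=
  (forall n p, klinear (fun m => g m n p)) /\
  (forall m p, klinear (fun n => g m n p)) /\
  (forall m n, klinear (g m n)).

Section Tensor.
Variable A : algType k.

Definition balanced (M N W : lmodType k) (ra : A -> M -> M) (la : A -> N -> N)
  (b : M -> N -> W) : Prop :=
  kbilinear b /\ forall a m n, b (ra a m) n = b m (la a n).

(* Two finite sums of simple tensors  \sum m_i (x) n_i  represent the same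
   element of M (x)_A N (the quotient of M (x)_k N by the span of
   m.a (x) n - m (x) a.n) iff every A-balanced k-bilinear map agrees on them. *)
Definition teq (M N : lmodType k) (ra : A -> M -> M) (la : A -> N -> N)
  (u v : seq (M * N)) : Prop :=
  forall (W : lmodType k) (b : M -> N -> W), balanced ra la b ->
    \sum_(p <- u) b p.1 p.2 = \sum_(p <- v) b p.1 p.2.

Definition balanced3 (M N P W : lmodType k) (ra1 : A -> M -> M)
  (la2 ra2 : A -> N -> N) (la3 : A -> P -> P) (g : M -> N -> P -> W) : Prop :=
  ktrilinear g /\
  (forall a m n p, g (ra1 a m) n p = g m (la2 a n) p) /\
  (forall a m n p, g m (ra2 a n) p = g m n (la3 a p)).

Definition teq3 (M N P : lmodType k) (ra1 : A -> M -> M)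
  (la2 ra2 : A -> N -> N) (la3 : A -> P -> P) (u v : seq (M * N * P)) : Prop :=
  forall (W : lmodType k) (g : M -> N -> P -> W),
    balanced3 ra1 la2 ra2 la3 g ->
    \sum_(p <- u) g p.1.1 p.1.2 p.2 = \sum_(p <- v) g p.1.1 p.1.2 p.2.

End Tensor.

Section Bialgebroid.
Variables (A H : algType k) (s t : A -> H).

Definition tH (u v : seq (H * H)) : Prop :=
  teq (fun a (x : H) => t a * x) (fun a (y : H) => s a * y) u v.
Definition tH3 (u v : seq (H * H * H)) : Prop :=
  teq3 (fun a (x : H) => t a * x) (fun a (y : H) => s a * y)
       (fun a (y : H) => t a * y) (fun a (z : H) => s a * z) u v.

Record is_left_bialgebroid (Delta : H -> seq (H * H)) (eps : H -> A) : Prop := {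
  s_lin : klinear s;
  s_mul : forall a b, s (a * b) = s a * s b;
  s_one : s 1 = 1;
  t_lin : klinear t;
  t_mul : forall a b, t (a * b) = t b * t a;
  t_one : t 1 = 1;
  st_comm : forall a b, s a * t b = t b * s a;
  Delta_lin : forall (c : k) x y,
    tH (Delta (c *: x + y)) ([seq (c *: p.1, p.2) | p <- Delta x] ++ Delta y);
  Delta_bilin : forall a b x,
    tH (Delta (s a * t b * x)) [seq (s a * p.1, t b * p.2) | p <- Delta x];
  eps_lin : klinear eps;
  eps_bilin : forall a b x, eps (s a * t b * x) = a * eps x * b;
  Delta_coassoc : forall x,
    tH3 [seq (q.1, q.2, p.2) | p <- Delta x, q <- Delta p.1]
        [seq (p.1, q.1, q.2) | p <- Delta x, q <- Delta p.2];
  (* counitality, via A (x)_A H = H and H (x)_A A = H *)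
  Delta_counitl : forall x, \sum_(p <- Delta x) s (eps p.1) * p.2 = x;
  Delta_counitr : forall x, \sum_(p <- Delta x) t (eps p.2) * p.1 = x;
  (* Delta lands in the Takeuchi product and is an algebra map into it *)
  Delta_takeuchi : forall x a,
    tH [seq (p.1 * t a, p.2) | p <- Delta x] [seq (p.1, p.2 * s a) | p <- Delta x];
  Delta_mul : forall x y,
    tH (Delta (x * y)) [seq (p.1 * q.1, p.2 * q.2) | p <- Delta x, q <- Delta y];
  Delta_one : tH (Delta 1) [:: (1, 1)];
  eps_s : forall x y, eps (x * s (eps y)) = eps (x * y);
  eps_t : forall x y, eps (x * t (eps y)) = eps (x * y);
  eps_one : eps 1 = 1
}.

Variables (Delta : H -> seq (H * H)) (eps : H -> A).

Definition is_Hmod (M : lmodType k) (act : H -> M -> M) : Prop :=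
  kbilinear act /\ (forall m, act 1 m = m) /\
  (forall x y m, act (x * y) m = act x (act y m)).

Definition tM (M : lmodType k) (act : H -> M -> M) (u v : seq (M * M)) : Prop :=
  teq (fun a m => act (t a) m) (fun a n => act (s a) n) u v.
Definition tM3 (M : lmodType k) (act : H -> M -> M) (u v : seq (M * M * M)) :=
  teq3 (fun a m => act (t a) m) (fun a n => act (s a) n)
       (fun a n => act (t a) n) (fun a p => act (s a) p) u v.

(* A quotient left H-module coring of H: a left H-module coring
   (comonoid in the monoidal category of left H-modules) Hb together with a
   surjective morphism of left H-module corings pi : H -> Hb. *)
Record is_qmc (Hb : lmodType k) (act : H -> Hb -> Hb) (pi : H -> Hb)
    (D : Hb -> seq (Hb * Hb)) (e : Hb -> A) : Prop := {
  q_mod : is_Hmod act;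
  q_D_lin : forall (c : k) m n,
    tM act (D (c *: m + n)) ([seq (c *: p.1, p.2) | p <- D m] ++ D n);
  q_D_H : forall h m,
    tM act (D (act h m)) [seq (act p.1 q.1, act p.2 q.2) | p <- Delta h, q <- D m];
  (* e : Hb -> A is a morphism of left H-modules (h.a = eps (h s(a))) *)
  q_e_lin : klinear e;
  q_e_H : forall h m, e (act h m) = eps (h * s (e m));
  q_coassoc : forall m,
    tM3 act [seq (q.1, q.2, p.2) | p <- D m, q <- D p.1]
            [seq (p.1, q.1, q.2) | p <- D m, q <- D p.2];
  q_counitl : forall m, \sum_(p <- D m) act (s (e p.1)) p.2 = m;
  q_counitr : forall m, \sum_(p <- D m) act (t (e p.2)) p.1 = m;
  q_pi_lin : klinear pi;
  q_pi_H : forall h x, pi (h * x) = act h (pi x);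
  q_pi_surj : forall y, exists x, pi x = y;
  q_pi_D : forall x, tM act (D (pi x)) [seq (pi p.1, pi p.2) | p <- Delta x];
  q_pi_e : forall x, e (pi x) = eps x
}.

Record qmc := QMC {
  qcar : lmodType k;
  qact : H -> qcar -> qcar;
  qpi : H -> qcar;
  qD : qcar -> seq (qcar * qcar);
  qe : qcar -> A;
  qax : is_qmc qact qpi qD qe
}.

Arguments qact : clear implicits.
Arguments qD : clear implicits.
Arguments qe : clear implicits.
Arguments qpi : clear implicits.

Definition qker (Q : qmc) : H -> Prop := fun x => qpi Q x = 0.

Definition qmc_iso (Q1 Q2 : qmc) : Prop :=
  exists f : qcar Q1 -> qcar Q2,
    klinear f /\ bijective f /\
    (forall x, f (qpi Q1 x) = qpi Q2 x) /\
    (forall h m, f (qact Q1 h m) = qact Q2 h (f m)) /\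
    (forall m, tM (qact Q2) (qD Q2 (f m)) [seq (f p.1, f p.2) | p <- qD Q1 m]) /\
    (forall m, qe Q2 (f m) = qe Q1 m).

Definition is_lid_coideal (I : H -> Prop) : Prop :=
  I 0 /\ (forall x y, I x -> I y -> I (x - y)) /\
  (forall h x, I x -> I (h * x)) /\
  (forall x, I x -> eps x = 0) /\
  (forall x, I x -> exists u : seq (H * H),
      (forall p, p \in u -> I p.1 \/ I p.2) /\ tH (Delta x) u).

End Bialgebroid.
End Defs.

(* Main.v *)
Require Import Defs.
From HB Require Import structures.
From mathcomp Require Import all_boot all_order all_algebra.
From mathcomp Require Import boolp.
Set Implicit Arguments. Unset Strict Implicit. Unset Printing Implicit Defensive.
Import GRing.Theory.
Local Open Scope ring_scope.

Record prelmod (k : fieldType) := PreLmod {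
  pT : Type;
  pR : pT -> pT -> Prop;
  p0 : pT; padd : pT -> pT -> pT; popp : pT -> pT; pscl : k -> pT -> pT;
  pR_refl : forall x, pR x x;
  pR_sym : forall x y, pR x y -> pR y x;
  pR_trans : forall x y z, pR x y -> pR y z -> pR x z;
  c_add : forall x x' y y', pR x x' -> pR y y' -> pR (padd x y) (padd x' y');
  c_opp : forall x x', pR x x' -> pR (popp x) (popp x');
  c_scl : forall a x x', pR x x' -> pR (pscl a x) (pscl a x');
  a_addA : forall x y z, pR (padd x (padd y z)) (padd (padd x y) z);
  a_addC : forall x y, pR (padd x y) (padd y x);
  a_add0 : forall x, pR (padd p0 x) x;
  a_addN : forall x, pR (padd (popp x) x) p0;
  a_sclA : forall a b x, pR (pscl a (pscl b x)) (pscl (a * b) x);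
  a_scl1 : forall x, pR (pscl 1 x) x;
  a_sclDr : forall a x y, pR (pscl a (padd x y)) (padd (pscl a x) (pscl a y));
  a_sclDl : forall a b x, pR (pscl (a + b) x) (padd (pscl a x) (pscl b x))
}.

Section Quot.
Variables (k : fieldType) (P : prelmod k).
Definition Qt : Type := {S : pT P -> Prop | exists x, S = @pR k P x}.
Definition cls (x : pT P) : Qt := exist _ (@pR k P x) (ex_intro _ x erefl).
Definition rep (q : Qt) : pT P := projT1 (cid (proj2_sig q)).
Lemma clsE x y : cls x = cls y <-> @pR k P x y.
Proof.
split.
  move=> /(congr1 (@proj1_sig _ _)) /= ->; exact: pR_refl.
move=> xy; rewrite /cls.
have E : @pR k P x = @pR k P y.
  apply: funext => z; apply: propext; split => h.
    exact: pR_trans (pR_sym xy) h.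
  exact: pR_trans xy h.
move: (ex_intro _ x erefl : exists z, @pR k P x = @pR k P z).
rewrite E => e; congr exist; exact: Prop_irrelevance.
Qed.
Lemma repK q : cls (rep q) = q.
Proof.
rewrite /rep; case: (cid _) => x /= e.
case: q e => S pS /= e; subst S; congr exist; exact: Prop_irrelevance.
Qed.
Lemma rep_cls x : @pR k P (rep (cls x)) x.
Proof. by apply/clsE; rewrite repK. Qed.
Lemma cls_surj q : exists x, q = cls x.
Proof. by exists (rep q); rewrite repK. Qed.

Definition zeroQ := cls (@p0 k P).
Definition addQ p q := cls (padd (rep p) (rep q)).
Definition oppQ q := cls (popp (rep q)).
Definition sclQ a q := cls (pscl a (rep q)).
Lemma addQE x y : addQ (cls x) (cls y) = cls (padd x y).
Proof. apply/clsE; apply: c_add; exact: rep_cls. Qed.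
Lemma oppQE x : oppQ (cls x) = cls (popp x).
Proof. apply/clsE; apply: c_opp; exact: rep_cls. Qed.
Lemma sclQE a x : sclQ a (cls x) = cls (pscl a x).
Proof. apply/clsE; apply: c_scl; exact: rep_cls. Qed.

HB.instance Definition _ := gen_eqMixin Qt.
HB.instance Definition _ := gen_choiceMixin Qt.

Lemma addQA : associative addQ.
Proof.
move=> a b c; case: (cls_surj a) (cls_surj b) (cls_surj c) => [x ->] [y ->] [z ->].
rewrite !addQE; apply/clsE; exact: a_addA.
Qed.
Lemma addQC : commutative addQ.
Proof.
move=> a b; case: (cls_surj a) (cls_surj b) => [x ->] [y ->].
rewrite !addQE; apply/clsE; exact: a_addC.
Qed.
Lemma add0Q : left_id zeroQ addQ.
Proof. move=> a; case: (cls_surj a) => [x ->]; rewrite addQE; apply/clsE; exact: a_add0. Qed.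
Lemma addNQ : left_inverse zeroQ oppQ addQ.
Proof. move=> a; case: (cls_surj a) => [x ->]; rewrite oppQE addQE; apply/clsE; exact: a_addN. Qed.
HB.instance Definition _ := GRing.isZmodule.Build Qt addQA addQC add0Q addNQ.
Lemma sclQA a b v : sclQ a (sclQ b v) = sclQ (a * b) v.
Proof. case: (cls_surj v) => [x ->]; rewrite !sclQE; apply/clsE; exact: a_sclA. Qed.
Lemma sclQ1 : left_id 1 sclQ.
Proof. move=> v; case: (cls_surj v) => [x ->]; rewrite !sclQE; apply/clsE; exact: a_scl1. Qed.
Lemma sclQDr : right_distributive sclQ +%R.
Proof.
move=> a u v; case: (cls_surj u) (cls_surj v) => [x ->] [y ->].
change (sclQ a (addQ (cls x) (cls y)) = addQ (sclQ a (cls x)) (sclQ a (cls y))).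
rewrite addQE !sclQE addQE; apply/clsE; exact: a_sclDr.
Qed.
Lemma sclQDl v : {morph sclQ^~ v: a b / a + b}.
Proof.
move=> a b; case: (cls_surj v) => [x ->].
change (sclQ (a + b) (cls x) = addQ (sclQ a (cls x)) (sclQ b (cls x))).
rewrite !sclQE addQE; apply/clsE; exact: a_sclDl.
Qed.
HB.instance Definition _ := GRing.Zmodule_isLmodule.Build k Qt sclQA sclQ1 sclQDr sclQDl.

Lemma clsD x y : cls x + cls y = cls (@padd k P x y). Proof. exact: addQE. Qed.
Lemma clsZ a x : a *: cls x = cls (@pscl k P a x). Proof. exact: sclQE. Qed.
Lemma clsN x : - cls x = cls (@popp k P x). Proof. exact: oppQE. Qed.
Lemma cls0 : (0 : Qt) = cls (@p0 k P). Proof. by []. Qed.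
End Quot.


Section Gen.
Variable k : fieldType.

Section KL.
Variables (U V : lmodType k) (f : U -> V) (fl : klinear f).
Lemma kl0 : f 0 = 0.
Proof. have := fl 1 0 0; rewrite !scale1r addr0 => /eqP; rewrite -subr_eq0 opprD addrA subrr sub0r oppr_eq0 => /eqP //. Qed.
Lemma klD x y : f (x + y) = f x + f y.
Proof. by have := fl 1 x y; rewrite !scale1r. Qed.
Lemma klZ c x : f (c *: x) = c *: f x.
Proof. by have := fl c x 0; rewrite !addr0 kl0 addr0. Qed.
Lemma klN x : f (- x) = - f x.
Proof. by rewrite -scaleN1r klZ scaleN1r. Qed.
Lemma klB x y : f (x - y) = f x - f y.
Proof. by rewrite klD klN. Qed.
Lemma kl_sum (I : Type) (r : seq I) (F : I -> U) : f (\sum_(i <- r) F i) = \sum_(i <- r) f (F i).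
Proof. elim: r => [|a r IH]; rewrite ?big_nil ?kl0 // !big_cons klD IH //. Qed.
End KL.

Definition S2 (M N W : lmodType k) (b : M -> N -> W) (v : seq (M * N)) :=
  \sum_(p <- v) b p.1 p.2.

Lemma S2_cat (M N W : lmodType k) (b : M -> N -> W) u v : S2 b (u ++ v) = S2 b u + S2 b v.
Proof. by rewrite /S2 big_cat. Qed.
Lemma S2_nil (M N W : lmodType k) (b : M -> N -> W) : S2 b [::] = 0.
Proof. by rewrite /S2 big_nil. Qed.
Lemma S2_cons (M N W : lmodType k) (b : M -> N -> W) p v : S2 b (p :: v) = b p.1 p.2 + S2 b v.
Proof. by rewrite /S2 big_cons. Qed.
Lemma S2_scl (M N W : lmodType k) (b : M -> N -> W) (bl : kbilinear b) c v :
  S2 b [seq (c *: p.1, p.2) | p <- v] = c *: S2 b v.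
Proof.
rewrite /S2 big_map scaler_sumr; apply: eq_bigr => p _ /=.
exact: (klZ (bl.1 p.2)).
Qed.
End Gen.


Section B.
Variables (k : fieldType) (A H : algType k) (s t : A -> H).

Definition mbal (M W : lmodType k) (act : H -> M -> M) (b : M -> M -> W) :=
  balanced (fun a m => act (t a) m) (fun a n => act (s a) n) b.
Definition mbal3 (M W : lmodType k) (act : H -> M -> M) (g : M -> M -> M -> W) :=
  balanced3 (fun a m => act (t a) m) (fun a n => act (s a) n)
       (fun a n => act (t a) n) (fun a p => act (s a) p) g.

Lemma tME (M : lmodType k) (act : H -> M -> M) u v :
  tM s t act u v <-> forall (W : lmodType k) (b : M -> M -> W), mbal act b -> S2 b u = S2 b v.
Proof. by []. Qed.
Lemma tHE u v :
  tH s t u v <-> forall (W : lmodType k) (b : H -> H -> W), @mbal (H : lmodType k) _ (fun h x => h * x) b -> S2 b u = S2 b v.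
Proof. by []. Qed.

Section Pull.
Variables (M1 M2 : lmodType k) (act1 : H -> M1 -> M1) (act2 : H -> M2 -> M2) (f : M1 -> M2).
Hypotheses (fl : klinear f) (fH : forall h m, f (act1 h m) = act2 h (f m)).

Lemma pull (W : lmodType k) (b : M2 -> M2 -> W) : mbal act2 b ->
  mbal act1 (fun y z => b (f y) (f z)).
Proof.
move=> [[bl br] bb]; split; first split.
- move=> n c x y /=; rewrite fl; exact: bl.
- move=> m c x y /=; rewrite fl; exact: br.
by move=> a m n /=; rewrite !fH bb.
Qed.

Lemma pull3 (W : lmodType k) (g : M2 -> M2 -> M2 -> W) : mbal3 act2 g ->
  mbal3 act1 (fun x y z => g (f x) (f y) (f z)).
Proof.
move=> [[g1 [g2 g3]] [b1 b2]]; split; first split; last split.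
- move=> n p c x y /=; rewrite fl; exact: g1.
- split => m p c x y /=; rewrite fl; [exact: g2 | exact: g3].
- by move=> a m n p /=; rewrite !fH b1.
- by move=> a m n p /=; rewrite !fH b2.
Qed.

Lemma tM_map u v : tM s t act1 u v ->
  tM s t act2 [seq (f p.1, f p.2) | p <- u] [seq (f p.1, f p.2) | p <- v].
Proof.
move=> e W b bb; have := e W _ (pull bb).
by rewrite /S2 !big_map.
Qed.
End Pull.

End B.


Section W.
Variables (k : fieldType) (A H : algType k) (s t : A -> H).
Variable I : H -> Prop.
Hypothesis IZ : forall c x, I x -> I (c *: x).

Definition good (u : seq (H * H)) := forall p, p \in u -> I p.1 \/ I p.2.
Definition Rel (v1 v2 : seq (H * H)) := exists u, good u /\ tH s t v1 (v2 ++ u).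
Definition wscl (c : k) (v : seq (H * H)) := [seq (c *: p.1, p.2) | p <- v].

Lemma S2_wscl (W : lmodType k) (b : H -> H -> W) (bl : kbilinear b) c v :
  S2 b (wscl c v) = c *: S2 b v.
Proof. exact: S2_scl. Qed.

Lemma good_cat u v : good u -> good v -> good (u ++ v).
Proof. by move=> gu gv p; rewrite mem_cat => /orP [/gu|/gv]. Qed.
Lemma good_scl c u : good u -> good (wscl c u).
Proof.
move=> gu p /mapP [q /gu [h|h] ->] /=; [left; exact: IZ | by right].
Qed.
Lemma good_nil : good [::]. Proof. by []. Qed.

Lemma RelE v1 v2 u : good u -> (forall (W : lmodType k) (b : H -> H -> W),
  @mbal k A H s t (H : lmodType k) _ (fun h x => h * x) b -> S2 b v1 = S2 b v2 + S2 b u) -> Rel v1 v2.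
Proof. move=> gu e; exists u; split => // W b bb; rewrite big_cat; exact: e. Qed.
Lemma Rof v1 v2 : (forall (W : lmodType k) (b : H -> H -> W),
  @mbal k A H s t (H : lmodType k) _ (fun h x => h * x) b -> S2 b v1 = S2 b v2) -> Rel v1 v2.
Proof. move=> e; apply: (RelE good_nil) => W b bb; have bl : kbilinear b := bb.1; by rewrite S2_nil addr0 e. Qed.
Lemma RelS v1 v2 : Rel v1 v2 -> exists2 u, good u & forall (W : lmodType k) (b : H -> H -> W),
  @mbal k A H s t (H : lmodType k) _ (fun h x => h * x) b -> S2 b v1 = S2 b v2 + S2 b u.
Proof. move=> [u [gu e]]; exists u => // W b bb; rewrite -S2_cat; exact: (e W b bb). Qed.

Definition Wp : prelmod k.
refine (@PreLmod k (seq (H * H)) Rel [::] cat (wscl (-1)) wscl _ _ _ _ _ _ _ _ _ _ _ _ _ _).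
- move=> v; exact: Rof.
- move=> x y /RelS [u gu e]; apply: (RelE (@good_scl (-1) _ gu)) => W b bb; have bl : kbilinear b := bb.1.
  by rewrite (e _ _ bb) S2_wscl // scaleN1r addrK.
- move=> x y z /RelS [u gu e] /RelS [u' gu' e']; apply: (RelE (good_cat gu' gu)) => W b bb; have bl : kbilinear b := bb.1.
  by rewrite (e _ _ bb) (e' _ _ bb) S2_cat addrA.
- move=> x x' y y' /RelS [u gu e] /RelS [u' gu' e']; apply: (RelE (good_cat gu gu')) => W b bb; have bl : kbilinear b := bb.1.
  by rewrite !S2_cat (e _ _ bb) (e' _ _ bb) addrACA.
- move=> x x' /RelS [u gu e]; apply: (RelE (@good_scl (-1) _ gu)) => W b bb; have bl : kbilinear b := bb.1.
  by rewrite !S2_wscl // (e _ _ bb) scalerDr.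
- move=> a x x' /RelS [u gu e]; apply: (RelE (@good_scl a _ gu)) => W b bb; have bl : kbilinear b := bb.1.
  by rewrite !S2_wscl // (e _ _ bb) scalerDr.
- move=> x y z; apply: Rof => W b bb; have bl : kbilinear b := bb.1; by rewrite catA.
- move=> x y; apply: Rof => W b bb; have bl : kbilinear b := bb.1; by rewrite !S2_cat addrC.
- move=> x; exact: Rof.
- move=> x; apply: Rof => W b bb; have bl : kbilinear b := bb.1; by rewrite S2_cat S2_wscl // S2_nil scaleN1r addNr.
- move=> a c x; apply: Rof => W b bb; have bl : kbilinear b := bb.1; by rewrite !S2_wscl // scalerA.
- move=> x; apply: Rof => W b bb; have bl : kbilinear b := bb.1; by rewrite !S2_wscl // scale1r.
- move=> a x y; apply: Rof => W b bb; have bl : kbilinear b := bb.1; by rewrite /wscl map_cat.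
- move=> a c x; apply: Rof => W b bb; have bl : kbilinear b := bb.1; by rewrite S2_cat !S2_wscl // scalerDl.
Defined.

Definition Wq := Qt Wp.
Definition wcls (v : seq (H * H)) : Wq := @cls k Wp v.

Lemma wclsE v1 v2 : wcls v1 = wcls v2 <-> Rel v1 v2.
Proof. exact: (@clsE k Wp). Qed.
Lemma wcls_cat u v : wcls (u ++ v) = wcls u + wcls v.
Proof. by rewrite /wcls (@clsD k Wp). Qed.
Lemma wcls_nil : wcls [::] = 0.
Proof. by rewrite (@cls0 k Wp). Qed.
Lemma wcls_scl c v : wcls (wscl c v) = c *: wcls v.
Proof. by rewrite /wcls (@clsZ k Wp). Qed.
Lemma wcls_sum v : wcls v = \sum_(p <- v) wcls [:: p].
Proof.
elim: v => [|p v IH]; first by rewrite big_nil wcls_nil.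
by rewrite big_cons -IH -wcls_cat.
Qed.
End W.


Section P1.
Variables (k : fieldType) (A H : algType k) (s t : A -> H)
  (Delta : H -> seq (H * H)) (eps : H -> A).
Variable Q : qmc s t Delta eps.
Let ax := qax Q.
Local Notation pi := (qpi Q).
Local Notation act := (qact (q:=Q)).
Local Notation I := (qker Q).
Let pil : klinear pi := q_pi_lin ax.

Lemma IZ1 c x : I x -> I (c *: x).
Proof. by rewrite /qker => h; rewrite (klZ pil) h scaler0. Qed.

Local Notation W := (Qt (Wp s t IZ1)).
Let wc (v : seq (H * H)) : W := wcls s t IZ1 v.

Definition pre (m : qcar Q) : H := projT1 (cid (q_pi_surj ax m)).
Lemma preK m : pi (pre m) = m.
Proof. by rewrite /pre; case: (cid _). Qed.

Lemma S2_1 (M N V : lmodType k) (b : M -> N -> V) y z : S2 b [:: (y, z)] = b y z.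
Proof. by rewrite S2_cons S2_nil addr0. Qed.

Lemma L1 y y' z : pi y = pi y' -> wc [:: (y, z)] = wc [:: (y', z)].
Proof.
move=> e; apply/wclsE; apply: (@RelE _ _ _ _ _ _ _ _ [:: (y - y', z)]).
  move=> p; rewrite mem_seq1 => /eqP -> /=; left.
  by rewrite /qker (klB pil) e subrr.
move=> V b bb; have bl : kbilinear b := bb.1.
by rewrite !S2_1 (klB (bl.1 z)) addrC subrK.
Qed.
Lemma L2 y z z' : pi z = pi z' -> wc [:: (y, z)] = wc [:: (y, z')].
Proof.
move=> e; apply/wclsE; apply: (@RelE _ _ _ _ _ _ _ _ [:: (y, z - z')]).
  move=> p; rewrite mem_seq1 => /eqP -> /=; right.
  by rewrite /qker (klB pil) e subrr.
move=> V b bb; have bl : kbilinear b := bb.1.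
by rewrite !S2_1 (klB (bl.2 y)) addrC subrK.
Qed.

Definition bb (m n : qcar Q) : W := wc [:: (pre m, pre n)].
Lemma bbE y z : bb (pi y) (pi z) = wc [:: (y, z)].
Proof. rewrite /bb (@L1 _ y); [apply: L2|]; exact: preK. Qed.

Lemma bb_bal : mbal s t act bb.
Proof.
have sm : forall m, m = pi (pre m) by move=> m; rewrite preK.
split; first split.
- move=> n c m m' /=.
  rewrite (sm m) (sm m') (sm n) -pil !bbE.
  rewrite /wc -wcls_scl -wcls_cat; apply/wclsE/Rof => V b bb0.
  have bl : kbilinear b := bb0.1.
  rewrite S2_cat /wscl /= !S2_1; exact: (klD (bl.1 (pre n))).
- move=> m c n n' /=.
  rewrite (sm m) (sm n') (sm n) -pil !bbE.
  rewrite /wc -wcls_scl -wcls_cat; apply/wclsE/Rof => V b bb0.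
  have bl : kbilinear b := bb0.1.
  rewrite S2_cat /wscl /= !S2_1 (klD (bl.2 (pre m))); congr (_ + _); rewrite (klZ (bl.2 (pre m))); symmetry; exact: (klZ (bl.1 (pre n))).
- move=> a m n; rewrite (sm m) (sm n) -!(q_pi_H ax) !bbE.
  apply/wclsE/Rof => V b bb0; rewrite !S2_1; exact: bb0.2.
Qed.

Lemma part1 : is_lid_coideal s t Delta eps I.
Proof.
have actl : forall h, klinear (act h) := (q_mod ax).1.2.
split; [|split; [|split; [|split]]].
- exact: (kl0 pil).
- by move=> x y; rewrite /qker (klB pil) => -> ->; rewrite subrr.
- by move=> h x; rewrite /qker (q_pi_H ax) => ->; rewrite (kl0 (actl h)).
- by move=> x; rewrite /qker -(q_pi_e ax) => ->; rewrite (kl0 (q_e_lin ax)).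
move=> x Ix.
have h1 := q_pi_D ax x bb_bal.
have h2 := q_D_lin ax (-1) 0 0 bb_bal.
rewrite scaler0 addr0 big_cat big_map /= in h2.
have h3 : \sum_(p <- qD (q:=Q) 0) bb ((-1) *: p.1) p.2 = - \sum_(p <- qD (q:=Q) 0) bb p.1 p.2.
  rewrite -sumrN; apply: eq_bigr => p _.
  by rewrite (klZ (bb_bal.1.1 _)) scaleN1r.
rewrite h3 addNr in h2.
move: h1; rewrite Ix h2 big_map.
under eq_bigr => p _ do rewrite bbE.
rewrite -[X in _ = X](@eq_bigr _ _ _ _ _ _ (fun p => wc [:: p])); last by case.
rewrite -wcls_sum -wcls_nil => /esym /wclsE [u [gu e]].
by exists u; split.
Qed.
End P1.


Section P2.
Variables (k : fieldType) (A H : algType k) (s t : A -> H)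
  (Delta : H -> seq (H * H)) (eps : H -> A).
Hypothesis HB : is_left_bialgebroid s t Delta eps.
Variable I : H -> Prop.
Hypothesis HI : is_lid_coideal s t Delta eps I.

Lemma I0 : I 0. Proof. by case: HI => [h0 [hB [hM [he hc]]]]. Qed.
Lemma IB x y : I x -> I y -> I (x - y). Proof. case: HI => [h0 [hB [hM [he hc]]]]; exact: hB. Qed.
Lemma IM h x : I x -> I (h * x). Proof. case: HI => [h0 [hB [hM [he hc]]]]; exact: hM. Qed.
Lemma Ieps x : I x -> eps x = 0. Proof. case: HI => [h0 [hB [hM [he hc]]]]; exact: he. Qed.
Lemma Icoid x : I x -> exists u : seq (H * H),
      (forall p, p \in u -> I p.1 \/ I p.2) /\ tH s t (Delta x) u.
Proof. case: HI => [h0 [hB [hM [he hc]]]]; exact: hc. Qed.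
Lemma IN x : I x -> I (- x). Proof. by move=> h; rewrite -sub0r; apply: IB => //; exact: I0. Qed.
Lemma ID x y : I x -> I y -> I (x + y).
Proof. by move=> hx hy; rewrite -[y]opprK; apply: IB => //; exact: IN. Qed.
Lemma IZ c x : I x -> I (c *: x).
Proof. by move=> h; rewrite -[x]mul1r scalerAl; exact: IM. Qed.

Lemma Ieq a b : a = b -> I (a - b).
Proof. by move=> ->; rewrite subrr; exact: I0. Qed.

Definition PH : prelmod k.
refine (@PreLmod k H (fun x y => I (x - y)) 0 +%R -%R *:%R _ _ _ _ _ _ _ _ _ _ _ _ _ _) => /=.
- by move=> x; rewrite subrr; exact: I0.
- by move=> x y h; rewrite -opprB; exact: IN.
- by move=> x y z h1 h2; rewrite -[x](subrK y) -addrA; exact: ID.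
- by move=> x x' y y' h1 h2; rewrite opprD addrACA; exact: ID.
- by move=> x x' h; rewrite -opprD; exact: IN.
- by move=> a x x' h; rewrite -scalerBr; exact: IZ.
- by move=> x y z; rewrite addrA subrr; exact: I0.
- by move=> x y; apply: Ieq; rewrite addrC.
- by move=> x; apply: Ieq; rewrite add0r.
- by move=> x; apply: Ieq; rewrite addNr.
- by move=> a b x; apply: Ieq; rewrite scalerA.
- by move=> x; apply: Ieq; rewrite scale1r.
- by move=> a x y; apply: Ieq; rewrite scalerDr.
- by move=> a b x; apply: Ieq; rewrite scalerDl.
Defined.

Local Notation Hb := (Qt PH).
Definition pc (x : H) : Hb := @cls k PH x.
Definition rp (q : Hb) : H := @rep k PH q.

Lemma pcE x y : pc x = pc y <-> I (x - y). Proof. exact: (@clsE k PH). Qed.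
Lemma rpK q : pc (rp q) = q. Proof. exact: (@repK k PH). Qed.
Lemma rp_pc x : I (rp (pc x) - x). Proof. exact: (@rep_cls k PH). Qed.
Lemma pc_surj q : exists x, q = pc x. Proof. exact: (@cls_surj k PH). Qed.
Lemma pc_lin : klinear pc.
Proof. by move=> c x y; rewrite /pc (@clsZ k PH) (@clsD k PH). Qed.
Lemma pc0 : pc 0 = 0. Proof. by rewrite (@cls0 k PH). Qed.
Lemma pc_ker x : pc x = 0 <-> I x.
Proof. by rewrite -pc0 pcE subr0. Qed.

Definition act (h : H) (q : Hb) : Hb := pc (h * rp q).
Definition D (q : Hb) : seq (Hb * Hb) := [seq (pc p.1, pc p.2) | p <- Delta (rp q)].
Definition e (q : Hb) : A := eps (rp q).

Lemma actE h x : act h (pc x) = pc (h * x).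
Proof. by apply/pcE; rewrite -mulrBr; apply: IM; exact: rp_pc. Qed.
Lemma eE x : e (pc x) = eps x.
Proof.
rewrite /e; apply/eqP; rewrite -subr_eq0 -(klB (eps_lin HB)); apply/eqP; apply: Ieps; exact: rp_pc.
Qed.

Lemma pcL c x y : pc (c *: x + y) = c *: pc x + pc y. Proof. exact: pc_lin. Qed.
Lemma pcD x y : pc (x + y) = pc x + pc y. Proof. exact: (klD pc_lin). Qed.
Lemma pcZ c x : pc (c *: x) = c *: pc x. Proof. exact: (klZ pc_lin). Qed.
Lemma pc_sum (T : Type) (r : seq T) (F : T -> H) : pc (\sum_(i <- r) F i) = \sum_(i <- r) pc (F i).
Proof. exact: (kl_sum pc_lin). Qed.

Lemma K (V : lmodType k) (b : H -> H -> V) :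
  @mbal k A H s t (H : lmodType k) V (fun h x => h * x) b ->
  (forall y z, I y \/ I z -> b y z = 0) ->
  forall x x', I (x - x') -> S2 b (Delta x) = S2 b (Delta x').
Proof.
move=> bb kill x x' hx.
have bl : kbilinear b := bb.1.
have h1 := Delta_lin HB 1 (x - x') x' bb.
rewrite scale1r subrK in h1.
change (S2 b (Delta x) = S2 b ([seq (1 *: p.1, p.2) | p <- Delta (x - x')] ++ Delta x')) in h1.
rewrite h1 S2_cat S2_scl // scale1r.
case: (Icoid hx) => u [gu hu].
have hu2 : S2 b (Delta (x - x')) = S2 b u by exact: (hu V b bb).
rewrite hu2 /S2 big_seq big1 ?add0r // => p pu; apply: kill; exact: gu.
Qed.

Lemma pullH (V : lmodType k) (b : Hb -> Hb -> V) : mbal s t act b ->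
  @mbal k A H s t (H : lmodType k) V (fun h x => h * x) (fun y z => b (pc y) (pc z)).
Proof.
move=> bb; apply: (@pull k A H s t H Hb (fun h x => h * x) act pc pc_lin _ V b bb).
by move=> h x; rewrite actE.
Qed.

Lemma killH (V : lmodType k) (b : Hb -> Hb -> V) : mbal s t act b ->
  forall y z, I y \/ I z -> b (pc y) (pc z) = 0.
Proof.
move=> bb y z; have bl : kbilinear b := bb.1.
case=> /pc_ker ->; [exact: (kl0 (bl.1 _)) | exact: (kl0 (bl.2 _))].
Qed.

Lemma DE (V : lmodType k) (b : Hb -> Hb -> V) (bb : mbal s t act b) x :
  S2 b (D (pc x)) = S2 (fun y z => b (pc y) (pc z)) (Delta x).
Proof.
have := K (pullH bb) (killH bb) (rp_pc x).
by rewrite /D /S2 big_map.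
Qed.

Lemma qmod : is_Hmod act.
Proof.
split; first split.
- move=> n c h h'; case: (pc_surj n) => x ->.
  by rewrite /= !actE mulrDl -scalerAl pcL.
- move=> h c m n; case: (pc_surj m) (pc_surj n) => [x ->] [y ->].
  by rewrite -pcL !actE mulrDr -scalerAr pcL.
split.
- by move=> m; case: (pc_surj m) => x ->; rewrite actE mul1r.
- by move=> x y m; case: (pc_surj m) => z ->; rewrite !actE mulrA.
Qed.

Lemma qDlin c m n :
  tM s t act (D (c *: m + n)) ([seq (c *: p.1, p.2) | p <- D m] ++ D n).
Proof.
case: (pc_surj m) (pc_surj n) => [x ->] [y ->] V b bb.
change (S2 b (D (c *: pc x + pc y)) = S2 b ([seq (c *: p.1, p.2) | p <- D (pc x)] ++ D (pc y))).
have bl : kbilinear b := bb.1.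
have bpb := pullH bb.
rewrite -pcL S2_cat S2_scl // !(DE bb).
have h := Delta_lin HB c x y bpb.
change (S2 (fun y z => b (pc y) (pc z)) (Delta (c *: x + y)) =
  S2 (fun y z => b (pc y) (pc z)) ([seq (c *: p.1, p.2) | p <- Delta x] ++ Delta y)) in h.
rewrite h S2_cat S2_scl //; exact: bpb.1.
Qed.

Lemma Smul (V : lmodType k) (b : H -> H -> V) (u : seq (H * H)) (v : seq (H * H)) :
  S2 b [seq (p.1 * q.1, p.2 * q.2) | p <- u, q <- v] =
  \sum_(p <- u) \sum_(q <- v) b (p.1 * q.1) (p.2 * q.2).
Proof. by rewrite /S2 big_allpairs_dep. Qed.

Lemma qDH h m :
  tM s t act (D (act h m)) [seq (act p.1 q.1, act p.2 q.2) | p <- Delta h, q <- D m].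
Proof.
case: (pc_surj m) => x -> V b bb.
change (S2 b (D (act h (pc x))) = S2 b [seq (act p.1 q.1, act p.2 q.2) | p <- Delta h, q <- D (pc x)]).
have bpb := pullH bb.
rewrite actE (DE bb).
have e1 : I (h * x - h * rp (pc x)).
  by rewrite -mulrBr; apply: IM; rewrite -opprB; apply: IN; exact: rp_pc.
rewrite (K bpb (killH bb) e1).
have h2 := Delta_mul HB h (rp (pc x)) bpb.
change (S2 (fun y z => b (pc y) (pc z)) (Delta (h * rp (pc x))) =
  S2 (fun y z => b (pc y) (pc z)) [seq (p.1 * q.1, p.2 * q.2) | p <- Delta h, q <- Delta (rp (pc x))]) in h2.
rewrite h2 Smul /S2 big_allpairs_dep /=.
apply: eq_bigr => p _; rewrite /D big_map /=.
by apply: eq_bigr => q _; rewrite !actE.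
Qed.

Lemma qelin : klinear e.
Proof.
move=> c m n; case: (pc_surj m) (pc_surj n) => [x ->] [y ->].
rewrite -pcL !eE; exact: (eps_lin HB).
Qed.

Lemma qeH h m : e (act h m) = eps (h * s (e m)).
Proof. by case: (pc_surj m) => x ->; rewrite actE !eE (eps_s HB). Qed.

Lemma g12 (V : lmodType k) (g : Hb -> Hb -> Hb -> V) : mbal3 s t act g ->
  forall w, mbal s t act (fun y z => g y z w).
Proof.
move=> [[g1 [g2 g3]] [b1 b2]] w; split; first split.
- move=> n; exact: g1.
- move=> m; exact: g2.
by move=> a m n; exact: b1.
Qed.

Lemma g23 (V : lmodType k) (g : Hb -> Hb -> Hb -> V) : mbal3 s t act g ->
  forall u, mbal s t act (fun y z => g u y z).
Proof.
move=> [[g1 [g2 g3]] [b1 b2]] u; split; first split.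
- move=> n; exact: g2.
- move=> m; exact: g3.
by move=> a m n; exact: b2.
Qed.

Lemma qcoassoc m :
  tM3 s t act [seq (q.1, q.2, p.2) | p <- D m, q <- D p.1]
              [seq (p.1, q.1, q.2) | p <- D m, q <- D p.2].
Proof.
move=> V g gb.
have gpb := @pull3 k A H s t H Hb (fun h x => h * x) act pc pc_lin (fun h x => esym (actE h x)) V g gb.
have hc := Delta_coassoc HB (rp m) gpb.
rewrite !big_allpairs_dep /= in hc.
rewrite !big_allpairs_dep /= {1 3}/D !big_map /=.
transitivity (\sum_(p <- Delta (rp m)) \sum_(q <- Delta p.1) g (pc q.1) (pc q.2) (pc p.2)).
  apply: eq_bigr => p _; exact: (DE (g12 gb (pc p.2)) p.1).
rewrite hc; apply: eq_bigr => p _; symmetry; exact: (DE (g23 gb (pc p.1)) p.2).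
Qed.

Lemma qcounitl m : \sum_(p <- D m) act (s (e p.1)) p.2 = m.
Proof.
rewrite /D big_map /=.
under eq_bigr => p _ do rewrite eE actE.
by rewrite -pc_sum (Delta_counitl HB) rpK.
Qed.

Lemma qcounitr m : \sum_(p <- D m) act (t (e p.2)) p.1 = m.
Proof.
rewrite /D big_map /=.
under eq_bigr => p _ do rewrite eE actE.
by rewrite -pc_sum (Delta_counitr HB) rpK.
Qed.

Lemma qpiD x : tM s t act (D (pc x)) [seq (pc p.1, pc p.2) | p <- Delta x].
Proof.
move=> V b bb; change (S2 b (D (pc x)) = S2 b [seq (pc p.1, pc p.2) | p <- Delta x]).
by rewrite (DE bb) /S2 big_map.
Qed.

Lemma Qax : is_qmc s t Delta eps act pc D e.
Proof.
constructor.
- exact: qmod.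
- exact: qDlin.
- exact: qDH.
- exact: qelin.
- exact: qeH.
- exact: qcoassoc.
- exact: qcounitl.
- exact: qcounitr.
- exact: pc_lin.
- by move=> h x; rewrite actE.
- by move=> y; case: (pc_surj y) => x ->; exists x.
- exact: qpiD.
- exact: eE.
Qed.

Definition Qmc : qmc s t Delta eps := @QMC k A H s t Delta eps Hb act pc D e Qax.

Lemma part2 : exists Q : qmc s t Delta eps, forall x, qker Q x <-> I x.
Proof. exists Qmc => x; exact: pc_ker. Qed.
End P2.


Section P3.
Variables (k : fieldType) (A H : algType k) (s t : A -> H)
  (Delta : H -> seq (H * H)) (eps : H -> A).

Lemma pi_eq (Q : qmc s t Delta eps) x y : qpi Q x = qpi Q y <-> qker Q (x - y).
Proof.
rewrite /qker (klB (q_pi_lin (qax Q))); split; first by move=> ->; rewrite subrr.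
by move/eqP; rewrite subr_eq0 => /eqP.
Qed.

Section F.
Variables Q1 Q2 : qmc s t Delta eps.
Hypothesis sub : forall x, qker Q1 x -> qker Q2 x.
Definition fi (m : qcar Q1) : qcar Q2 := qpi Q2 (pre m).
Lemma fiE x : fi (qpi Q1 x) = qpi Q2 x.
Proof. by apply/pi_eq; apply: sub; apply/pi_eq; rewrite preK. Qed.
Lemma fi_lin : klinear fi.
Proof.
move=> c m n; rewrite -(preK m) -(preK n) -(q_pi_lin (qax Q1)) !fiE.
exact: (q_pi_lin (qax Q2)).
Qed.
Lemma fi_act h m : fi (qact (q:=Q1) h m) = qact (q:=Q2) h (fi m).
Proof. by rewrite -(preK m) -(q_pi_H (qax Q1)) !fiE (q_pi_H (qax Q2)). Qed.
Lemma fi_D m : tM s t (qact (q:=Q2)) (qD (q:=Q2) (fi m)) [seq (fi p.1, fi p.2) | p <- qD (q:=Q1) m].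
Proof.
rewrite -(preK m) fiE => V b bb.
have h1 := q_pi_D (qax Q2) (pre m) bb.
have h2 := tM_map fi_lin fi_act (q_pi_D (qax Q1) (pre m)) bb.
rewrite h1 h2 -map_comp !big_map; apply: eq_bigr => p _ /=; by rewrite !fiE.
Qed.
Lemma fi_e m : qe (q:=Q2) (fi m) = qe (q:=Q1) m.
Proof. by rewrite -(preK m) fiE !(q_pi_e (qax _)). Qed.
End F.

Lemma part3 (Q1 Q2 : qmc s t Delta eps) :
  (forall x, qker Q1 x <-> qker Q2 x) <-> qmc_iso Q1 Q2.
Proof.
split.
- move=> ek.
  have s12 : forall x, qker Q1 x -> qker Q2 x by move=> x /ek.
  have s21 : forall x, qker Q2 x -> qker Q1 x by move=> x /ek.
  exists (@fi Q1 Q2); split; first exact: fi_lin s12.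
  split.
    exists (@fi Q2 Q1) => m; rewrite -(preK m).
      by rewrite (fiE s12) (fiE s21).
    by rewrite (fiE s21) (fiE s12).
  split; first exact: fiE s12.
  split; first exact: fi_act s12.
  split; first exact: fi_D s12.
  exact: fi_e s12.
- move=> [f [fl [fb [fpi _]]]] x; rewrite /qker; split.
    by rewrite -fpi => ->; rewrite (kl0 fl).
  rewrite -fpi -(kl0 fl) => h; exact: (bij_inj fb h).
Qed.
End P3.

Unset Implicit Arguments.

Theorem proposition2p3 (k : fieldType) (A H : algType k) (s t : A -> H)
  (Delta : H -> seq (H * H)) (eps : H -> A)
  (HB : is_left_bialgebroid s t Delta eps) :
  (* ker pi is a left ideal two-sided coideal *)
  (forall Q : qmc s t Delta eps, is_lid_coideal s t Delta eps (qker Q)) /\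
  (* every left ideal two-sided coideal I is the kernel of a quotient
     left H-module coring (namely H -> H/I) *)
  (forall I : H -> Prop, is_lid_coideal s t Delta eps I ->
     exists Q : qmc s t Delta eps, forall x, qker Q x <-> I x) /\
  (* two quotients are isomorphic under H iff they have the same kernel *)
  (forall Q1 Q2 : qmc s t Delta eps,
     (forall x, qker Q1 x <-> qker Q2 x) <-> qmc_iso Q1 Q2).
Proof.
split; first by move=> Q; exact: part1.
split; first by move=> I HI; exact: (@part2 k A H s t Delta eps HB I HI).
move=> Q1 Q2; exact: part3.
Qed.
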